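(* Let $F(s)=-\sum_{j=1}^\infty j\ln(1-e^{sj})$ for $s<0$. Then for every integer $m\ge0$, $$F^{(m)}(-s)\sim\zeta(3)\,\Gamma(m+2)\,\frac{1}{s^{m+2}},\quad\text{as } s\downarrow0.$$
   Context: $F$ is the fulcrum $s\mapsto\ln M(e^s)$ of the MacMahon function $M(z)=\prod_{j\ge1}(1-z^j)^{-j}$, the generating function of plane partitions. $F^{(m)}$ is the $m$-th derivative. $\alpha(s)\sim\beta(s)$ means $\alpha(s)/\beta(s)\to1$. $\zeta$ is the Riemann zeta function and $\Gamma$ the Gamma function. *)

(* Defs.v *)
From Stdlib Require Import Reals.
From Coquelicot Require Import Coquelicot.
Open Scope R_scope.

(* The fulcrum of the MacMahon function: F(s) = - sum_{j>=1} j ln(1 - e^{s j}),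
   meaningful for s < 0 (index n corresponds to j = n+1). *)
Definition F (s : R) : R :=
  - Series (fun n : nat => INR (S n) * ln (1 - exp (s * INR (S n)))).

Definition zeta3 : R := Series (fun n : nat => / (INR (S n)) ^ 3).

Definition Gamma (x : R) : R :=
  RInt_gen (fun t => Rpower t (x - 1) * exp (- t))
           (at_right 0) (Rbar_locally p_infty).

(* Main.v *)
Require Import Defs.
From Stdlib Require Import Reals Lra Lia Arith Factorial.
From Coquelicot Require Import Coquelicot.
Open Scope R_scope.


Lemma lim_eps {T} {F : (T -> Prop) -> Prop} {FF : Filter F} (f : T -> R) l :
  filterlim f F (locally l) -> forall eps, 0 < eps -> F (fun x => Rabs (f x - l) < eps).
Proof.
  intros H eps Heps. rewrite filterlim_locally in H.
  specialize (H (mkposreal eps Heps)). exact H.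
Qed.

Lemma eps_lim {T} {F : (T -> Prop) -> Prop} {FF : Filter F} (f : T -> R) l :
  (forall eps, 0 < eps -> F (fun x => Rabs (f x - l) < eps)) -> filterlim f F (locally l).
Proof.
  intros H. apply filterlim_locally. intros [eps Heps]. exact (H eps Heps).
Qed.

Lemma lim_mult {T} {F : (T -> Prop) -> Prop} {FF : Filter F} (f g : T -> R) a b :
  filterlim f F (locally a) -> filterlim g F (locally b) ->
  filterlim (fun x => f x * g x) F (locally (a * b)).
Proof. intros Hf Hg. exact (filterlim_comp_2 f g Rmult Hf Hg (@filterlim_mult R_AbsRing a b)). Qed.

Lemma lim_plus {T} {F : (T -> Prop) -> Prop} {FF : Filter F} (f g : T -> R) a b :
  filterlim f F (locally a) -> filterlim g F (locally b) ->
  filterlim (fun x => f x + g x) F (locally (a + b)).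
Proof. intros Hf Hg. exact (filterlim_comp_2 f g Rplus Hf Hg (@filterlim_plus R_AbsRing R_NormedModule a b)). Qed.

Lemma lim_const {T} {F : (T -> Prop) -> Prop} {FF : Filter F} (a : R) :
  filterlim (fun _ => a) F (locally a).
Proof. apply filterlim_const. Qed.

Lemma finite_sum_lim {T} (F : (T -> Prop) -> Prop) {FF : Filter F} (u : nat -> T -> R) (L : nat -> R) :
  (forall n, filterlim (u n) F (locally (L n))) ->
  forall N, filterlim (fun y => sum_f_R0 (fun k => u k y) N) F (locally (sum_f_R0 L N)).
Proof.
  intros H N; induction N as [|N IH]; simpl.
  - apply H.
  - apply lim_plus; auto.
Qed.

Lemma series_zero : Series (fun _ => 0) = 0.
Proof.
  rewrite <- (Series_ext (fun n => 0 * (fun _ => 1) n)) by (intros; simpl; ring).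
  rewrite Series_scal_l. ring.
Qed.

Lemma series_nonneg (a : nat -> R) : (forall n, 0 <= a n) -> ex_series a -> 0 <= Series a.
Proof.
  intros H1 H2. rewrite <- series_zero. apply Series_le; auto. intros; split; auto; lra.
Qed.

Lemma ex_le_R (a M : nat -> R) : (forall n, Rabs (a n) <= M n) -> ex_series M -> ex_series a.
Proof. intros. apply (@ex_series_le R_AbsRing R_CompleteNormedModule a M); auto. Qed.

Lemma series_abs_le (a M : nat -> R) : (forall n, Rabs (a n) <= M n) -> ex_series M ->
  Rabs (Series a) <= Series M.
Proof.
  intros H1 H2. eapply Rle_trans; [apply Series_Rabs|].
  - apply (ex_le_R _ M); auto. intros n. rewrite Rabs_Rabsolu; auto.
  - apply Series_le; auto. intros; split; auto. apply Rabs_pos.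
Qed.

Lemma tannery {T} (F : (T -> Prop) -> Prop) {FF : ProperFilter F} (u : nat -> T -> R) (L M : nat -> R) :
  (forall n, filterlim (u n) F (locally (L n))) ->
  ex_series M ->
  F (fun y => forall n, Rabs (u n y) <= M n) ->
  filterlim (fun y => Series (fun n => u n y)) F (locally (Series L)).
Proof.
  intros Hl HM Hb.
  assert (HL : forall n, Rabs (L n) <= M n).
  { intros n. apply Rle_plus_epsilon. intros eps Heps.
    destruct (Hierarchy.filter_ex _ (filter_and _ _ Hb (lim_eps _ _ (Hl n) eps Heps))) as [y [H1 H2]].
    specialize (H1 n).
    pose proof (Rabs_triang (u n y) (L n - u n y)).
    replace (u n y + (L n - u n y)) with (L n) in H by ring.
    rewrite Rabs_minus_sym in H2. lra. }
  assert (HexL : ex_series L) by (apply (ex_le_R L M); auto).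
  apply eps_lim. intros eps Heps.
  destruct (proj1 (is_series_Reals M (Series M)) (Series_correct _ HM) (eps/3)) as [N0 HN0]; [lra|].
  specialize (HN0 N0 (le_n _)). unfold Rdist in HN0.
  assert (HM0 : forall n, 0 <= M n) by (intros n; eapply Rle_trans; [apply Rabs_pos|apply HL]).
  assert (Htail : Series (fun k => M (S N0 + k)%nat) < eps / 3).
  { rewrite (Series_incr_n M (S N0)) in HN0 by (lia || auto). simpl pred in HN0.
    replace (sum_f_R0 M N0 - (sum_f_R0 M N0 + Series (fun k : nat => M (S N0 + k)%nat)))
      with (- Series (fun k : nat => M (S N0 + k)%nat)) in HN0 by ring.
    rewrite Rabs_Ropp in HN0. eapply Rle_lt_trans; [apply Rle_abs|exact HN0]. }
  pose proof (finite_sum_lim F u L Hl N0) as Hfin.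
  generalize (filter_and _ _ Hb (lim_eps _ _ Hfin (eps/3) ltac:(lra))).
  apply filter_imp. intros y [Hy1 Hy2].
  assert (Hexu : ex_series (fun n => u n y)) by (apply (ex_le_R _ M); auto).
  rewrite (Series_incr_n (fun n => u n y) (S N0)) by (lia || auto).
  rewrite (Series_incr_n L (S N0)) by (lia || auto). simpl pred.
  assert (E1 : Rabs (Series (fun k => u (S N0 + k)%nat y)) <= Series (fun k => M (S N0 + k)%nat))
    by (apply series_abs_le; auto; apply ex_series_incr_n; auto).
  assert (E2 : Rabs (Series (fun k => L (S N0 + k)%nat)) <= Series (fun k => M (S N0 + k)%nat))
    by (apply series_abs_le; auto; apply ex_series_incr_n; auto).
  replace (sum_f_R0 (fun n : nat => u n y) N0 + Series (fun k : nat => u (S N0 + k)%nat y) -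
     (sum_f_R0 L N0 + Series (fun k : nat => L (S N0 + k)%nat))) with
   ((sum_f_R0 (fun n : nat => u n y) N0 - sum_f_R0 L N0) + (Series (fun k : nat => u (S N0 + k)%nat y)
     - Series (fun k : nat => L (S N0 + k)%nat))) by ring.
  eapply Rle_lt_trans; [apply Rabs_triang|].
  eapply Rle_lt_trans; [apply Rplus_le_compat_l; apply Rabs_triang|].
  rewrite Rabs_Ropp. lra.
Qed.

Lemma between_abs x hh z : Rmin x (x + hh) <= z <= Rmax x (x + hh) -> Rabs (z - x) <= Rabs hh.
Proof.
  unfold Rmin, Rmax; destruct (Rle_dec x (x + hh)); intros Hz;
  unfold Rabs; destruct (Rcase_abs (z - x)); destruct (Rcase_abs hh); lra.
Qed.

Lemma series_derive (g h : nat -> R -> R) (M : nat -> R) (x r : R) :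
  0 < r ->
  (forall n y, Rabs (y - x) < r -> is_derive (g n) y (h n y)) ->
  (forall n y, Rabs (y - x) < r -> Rabs (h n y) <= M n) ->
  ex_series M ->
  (forall y, Rabs (y - x) < r -> ex_series (fun n => g n y)) ->
  is_derive (fun y => Series (fun n => g n y)) x (Series (fun n => h n x)).
Proof.
  intros Hr Hd Hb HM Hex.
  assert (Hx0 : Rabs (x - x) < r) by (rewrite Rminus_eq_0, Rabs_R0; auto).
  pose (u := fun n hh => (g n (x + hh) - g n x) / hh).
  assert (HT : filterlim (fun hh => Series (fun n => u n hh)) (Rbar_locally' (Finite 0))
                 (locally (Series (fun n => h n x)))).
  { apply tannery with (M := M); auto.
    - apply Rbar_locally'_filter.
    - intros n. apply eps_lim. intros eps Heps.
      pose proof (proj1 (is_derive_Reals _ _ _) (Hd n x Hx0) eps Heps) as [delta Hdl].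
      exists delta. intros y Hy Hy0. unfold u.
      apply Hdl; auto. change (Rabs (y - 0) < delta) in Hy. rewrite Rminus_0_r in Hy. auto.
    - exists (mkposreal r Hr). intros hh Hh Hh0 n. change (Rabs (hh - 0) < r) in Hh.
      rewrite Rminus_0_r in Hh. unfold u.
      destruct (MVT_gen (g n) x (x + hh) (h n)) as [c [Hc1 Hc2]].
      + intros z Hz. apply Hd.
        assert (Rabs (z - x) <= Rabs hh) by (apply between_abs; lra).
        lra.
      + intros z Hz. apply continuity_pt_filterlim. apply (@ex_derive_continuous R_AbsRing R_NormedModule).
        exists (h n z). apply Hd.
        assert (Rabs (z - x) <= Rabs hh) by (apply between_abs; lra).
        lra.
      + rewrite Hc2. replace (h n c * (x + hh - x) / hh) with (h n c) by (field; auto).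
        apply Hb.
        assert (Rabs (c - x) <= Rabs hh) by (apply between_abs; lra).
        lra. }
  apply is_derive_Reals. intros eps Heps.
  destruct (lim_eps _ _ HT eps Heps) as [delta Hdl].
  assert (Hdr : 0 < Rmin delta r) by (apply Rmin_pos; [apply cond_pos|auto]).
  exists (mkposreal _ Hdr). intros hh Hh0 Hh. simpl in Hh.
  assert (Hh1 : Rabs hh < delta) by (eapply Rlt_le_trans; [exact Hh| apply Rmin_l]).
  assert (Hh2 : Rabs hh < r) by (eapply Rlt_le_trans; [exact Hh| apply Rmin_r]).
  specialize (Hdl hh). 
  assert (E : Series (fun n => u n hh) =
     (Series (fun n => g n (x + hh)) - Series (fun n => g n x)) / hh).
  { unfold u, Rdiv. rewrite Series_scal_r. rewrite Series_minus; auto.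
    apply Hex. replace (x + hh - x) with hh by ring. auto. }
  rewrite <- E. apply Hdl; auto. change (Rabs (hh - 0) < delta). rewrite Rminus_0_r. auto.
Qed.

Lemma sum_nonneg (a : nat -> R) N : (forall n, 0 <= a n) -> 0 <= sum_f_R0 a N.
Proof. intros H; induction N; simpl; auto. specialize (H (S N)). lra. Qed.

Lemma term_le_sum (a : nat -> R) N : (forall n, 0 <= a n) -> a N <= sum_f_R0 a N.
Proof. intros H; destruct N; simpl. lra. pose proof (sum_nonneg a N H). lra. Qed.

Lemma sum_le_series (a : nat -> R) N : (forall n, 0 <= a n) -> ex_series a -> sum_f_R0 a N <= Series a.
Proof.
  intros H1 H2. rewrite (Series_incr_n a (S N)) by (lia || auto). simpl pred.
  pose proof (series_nonneg (fun k => a (S N + k)%nat) (fun k => H1 _) (proj1 (ex_series_incr_n _ _) H2)).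
  lra.
Qed.

Lemma term_le_series (a : nat -> R) N : (forall n, 0 <= a n) -> ex_series a -> a N <= Series a.
Proof. intros. eapply Rle_trans; [apply term_le_sum|apply sum_le_series]; auto. Qed.

Lemma bounded_ex (a : nat -> R) B : (forall n, 0 <= a n) -> (forall N, sum_f_R0 a N <= B) -> ex_series a.
Proof.
  intros H1 H2. apply ex_series_Reals_1. apply growing_cv.
  - intros n. simpl. specialize (H1 (S n)). lra.
  - exists B. intros x [n ->]. auto.
Qed.

Lemma series_le_bound (a : nat -> R) B : ex_series a -> (forall N, sum_f_R0 a N <= B) -> Series a <= B.
Proof.
  intros H1 H2. destruct (Rle_dec (Series a) B) as [|Hn]; auto. exfalso.
  destruct (proj1 (is_series_Reals a _) (Series_correct _ H1) (Series a - B)) as [N HN]; [lra|].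
  specialize (HN N (le_n _)). specialize (H2 N). unfold Rdist in HN.
  rewrite Rabs_minus_sym in HN. pose proof (Rle_abs (Series a - sum_f_R0 a N)). lra.
Qed.

Lemma series_sum_f (a : nat -> nat -> R) N : (forall j, ex_series (a j)) ->
  ex_series (fun k => sum_f_R0 (fun j => a j k) N) /\
  Series (fun k => sum_f_R0 (fun j => a j k) N) = sum_f_R0 (fun j => Series (a j)) N.
Proof.
  intros H. induction N as [|N [IH1 IH2]]; simpl.
  - split; auto.
  - split.
    + apply (ex_series_plus (V := R_NormedModule)); auto.
    + rewrite Series_plus; auto. rewrite IH2. auto.
Qed.

Lemma swap_le (a : nat -> nat -> R) :
  (forall j k, 0 <= a j k) ->
  (forall k, ex_series (fun j => a j k)) ->
  ex_series (fun k => Series (fun j => a j k)) ->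
  (forall j, ex_series (fun k => a j k)) /\ ex_series (fun j => Series (fun k => a j k)) /\
  Series (fun j => Series (fun k => a j k)) <= Series (fun k => Series (fun j => a j k)).
Proof.
  intros H0 H1 H2.
  assert (Hj : forall j, ex_series (fun k => a j k)).
  { intros j. apply (ex_le_R _ (fun k => Series (fun j => a j k))); auto.
    intros k. rewrite Rabs_pos_eq by auto.
    apply (term_le_series (fun j => a j k) j (fun n => H0 n k) (H1 k)). }
  set (S := Series (fun k => Series (fun j => a j k))).
  assert (HP : forall J, sum_f_R0 (fun j => Series (fun k => a j k)) J <= S).
  { intros J. destruct (series_sum_f a J Hj) as [E1 E2].
    assert (E3 : Series (fun k => sum_f_R0 (fun j => a j k) J) = sum_f_R0 (fun j => Series (fun k => a j k)) J) by exact E2.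
    rewrite <- E3.
    apply Series_le; auto. intros k. split.
    - apply sum_nonneg. intros; auto.
    - apply (sum_le_series (fun j => a j k)); auto. }
  assert (Hnn : forall j, 0 <= Series (fun k => a j k)) by (intros; apply series_nonneg; auto).
  assert (Hex : ex_series (fun j => Series (fun k => a j k))) by (apply (bounded_ex _ S); auto).
  split; [auto|split; [auto|]].
  apply series_le_bound; auto.
Qed.

Lemma swap_eq (a : nat -> nat -> R) :
  (forall j k, 0 <= a j k) ->
  (forall k, ex_series (fun j => a j k)) ->
  ex_series (fun k => Series (fun j => a j k)) ->
  (forall j, ex_series (fun k => a j k)) /\ ex_series (fun j => Series (fun k => a j k)) /\
  Series (fun j => Series (fun k => a j k)) = Series (fun k => Series (fun j => a j k)).
Proof.
  intros H0 H1 H2. destruct (swap_le a H0 H1 H2) as [A [B C]].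
  destruct (swap_le (fun k j => a j k) (fun k j => H0 j k) A B) as [_ [_ D]].
  split; [auto|split; [auto|lra]].
Qed.

Definition J (n : nat) : R := INR (S n).
Definition Tt (p : nat) (t : R) : R := Series (fun n => J n ^ p * exp (- t * J n)).

Lemma J_pos n : 0 < J n.
Proof. unfold J. apply lt_0_INR. lia. Qed.
Lemma J_ge1 n : 1 <= J n.
Proof. unfold J. rewrite S_INR. pose proof (pos_INR n). lra. Qed.
Lemma J_S n : J (S n) = J n + 1.
Proof. unfold J. rewrite (S_INR (S n)). auto. Qed.

Lemma exp_J c n : exp (c * J n) = exp c ^ (S n).
Proof.
  induction n as [|n IH].
  - unfold J; simpl. rewrite Rmult_1_r, Rmult_1_r. auto.
  - rewrite J_S. rewrite Rmult_plus_distr_l, exp_plus, IH, Rmult_1_r. simpl. ring.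
Qed.

Lemma pow_le_fact_exp x p : 0 <= x -> x ^ p <= INR (fact p) * exp x.
Proof.
  intros Hx. pose proof (exp_ge_taylor x p Hx) as H.
  pose proof (term_le_sum (fun k => x ^ k / INR (fact k)) p) as H2.
  assert (Hf : 0 < INR (fact p)) by (apply lt_0_INR; apply lt_O_fact).
  assert (x ^ p / INR (fact p) <= exp x).
  { eapply Rle_trans; [apply H2|exact H]. intros n.
    apply Rmult_le_pos; [apply pow_le; auto|]. apply Rlt_le, Rinv_0_lt_compat, lt_0_INR, lt_O_fact. }
  apply (Rmult_le_compat_l (INR (fact p))) in H0; [|lra].
  replace (INR (fact p) * (x ^ p / INR (fact p))) with (x ^ p) in H0 by (field; lra). auto.
Qed.

Lemma Tterm_bound p t n : 0 < t ->
  J n ^ p * exp (- t * J n) <= INR (fact p) * (2 / t) ^ p * exp (- t / 2) ^ (S n).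
Proof.
  intros Ht. rewrite <- exp_J.
  set (y := t / 2 * J n).
  assert (Hy : 0 <= y) by (unfold y; pose proof (J_pos n); apply Rmult_le_pos; lra).
  assert (E1 : J n ^ p = (2 / t) ^ p * y ^ p).
  { unfold y. rewrite <- Rpow_mult_distr. f_equal. field. lra. }
  assert (E2 : exp (- t * J n) = exp (- y) * exp (- y)).
  { rewrite <- exp_plus. f_equal. unfold y. field. }
  assert (E3 : - t / 2 * J n = - y) by (unfold y; field).
  rewrite E1, E2, E3.
  pose proof (pow_le_fact_exp y p Hy) as H.
  assert (H' : y ^ p * exp (- y) <= INR (fact p)).
  { apply (Rmult_le_compat_r (exp (- y))) in H; [|apply Rlt_le, exp_pos].
    rewrite Rmult_assoc, <- exp_plus, Rplus_opp_r, exp_0, Rmult_1_r in H. auto. }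
  assert (0 <= (2 / t) ^ p) by (apply pow_le; apply Rlt_le, Rdiv_lt_0_compat; lra).
  pose proof (exp_pos (- y)).
  replace ((2 / t) ^ p * y ^ p * (exp (- y) * exp (- y))) with
     ((2 / t) ^ p * exp (- y) * (y ^ p * exp (- y))) by ring.
  replace (INR (fact p) * (2 / t) ^ p * exp (- y)) with ((2 / t) ^ p * exp (- y) * INR (fact p)) by ring.
  apply Rmult_le_compat_l; auto. apply Rmult_le_pos; lra.
Qed.

Lemma geomS_series C q : 0 <= q < 1 ->
  ex_series (fun n => C * q ^ (S n)) /\ Series (fun n => C * q ^ (S n)) = C * (q / (1 - q)).
Proof.
  intros Hq.
  assert (Hq' : Rabs q < 1) by (rewrite Rabs_pos_eq; lra).
  assert (Ex : ex_series (fun n => (C * q) * q ^ n)).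
  { apply (ex_series_scal_l (V := R_NormedModule) (C * q) (fun n => q ^ n)). apply ex_series_geom; auto. }
  split.
  - eapply ex_series_ext; [|exact Ex]. intros n. simpl. ring.
  - rewrite (Series_ext _ (fun n => (C * q) * q ^ n)) by (intros; simpl; ring).
    rewrite Series_scal_l, Series_geom by auto. unfold Rdiv. ring.
Qed.

Lemma Tt_ex p t : 0 < t -> ex_series (fun n => J n ^ p * exp (- t * J n)).
Proof.
  intros Ht. pose proof (exp_pos (- t / 2)).
  assert (exp (- t / 2) < 1) by (rewrite <- exp_0; apply exp_increasing; lra).
  apply (ex_le_R _ (fun n => INR (fact p) * (2 / t) ^ p * exp (- t / 2) ^ (S n))).
  - intros n. rewrite Rabs_pos_eq; [apply Tterm_bound; auto|].
    apply Rmult_le_pos; [apply pow_le, Rlt_le, J_pos|apply Rlt_le, exp_pos].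
  - apply geomS_series. lra.
Qed.

Lemma Tt_nonneg p t : 0 < t -> 0 <= Tt p t.
Proof.
  intros Ht. apply series_nonneg; [|apply Tt_ex; auto].
  intros n. apply Rmult_le_pos; [apply pow_le, Rlt_le, J_pos|apply Rlt_le, exp_pos].
Qed.

Lemma Tt_bound p t : 0 < t -> Tt p t <= INR (fact p) * (2 / t) ^ p * (2 / t).
Proof.
  intros Ht. pose proof (exp_pos (- t / 2)) as Hq0.
  assert (Hq1 : exp (- t / 2) < 1) by (rewrite <- exp_0; apply exp_increasing; lra).
  destruct (geomS_series (INR (fact p) * (2 / t) ^ p) (exp (- t / 2))) as [E1 E2]; [lra|].
  unfold Tt. eapply Rle_trans; [apply Series_le; [|exact E1]|].
  - intros n. split; [|apply Tterm_bound; auto].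
    apply Rmult_le_pos; [apply pow_le, Rlt_le, J_pos|apply Rlt_le, exp_pos].
  - rewrite E2. apply Rmult_le_compat_l.
    + apply Rmult_le_pos; [apply pos_INR|apply pow_le, Rlt_le, Rdiv_lt_0_compat; lra].
    + set (q := exp (- t / 2)) in *.
      assert (Hq : q * exp (t / 2) = 1) by (unfold q; rewrite <- exp_plus; replace (- t / 2 + t / 2) with 0 by field; apply exp_0).
      pose proof (exp_ineq1_le (t / 2)).
      apply (Rmult_le_reg_r (1 - q)); [lra|].
      unfold Rdiv. rewrite Rmult_assoc, Rinv_l, Rmult_1_r by lra.
      apply (Rmult_le_reg_r (t * exp (t / 2))). apply Rmult_lt_0_compat; [lra|apply exp_pos].
      replace (q * (t * exp (t / 2))) with (t * (q * exp (t / 2))) by ring.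
      replace (2 * / t * (1 - q) * (t * exp (t / 2))) with (2 * (exp (t / 2) - q * exp (t / 2))) by (field; lra).
      rewrite Hq. lra.
Qed.

Lemma Tt_q p t : Tt p t = Series (fun n => J n ^ p * exp (- t) ^ (S n)).
Proof. unfold Tt. apply Series_ext. intros n. rewrite exp_J. auto. Qed.

Lemma pow_diff p b : 0 <= b ->
  INR (S p) * b ^ p <= (b + 1) ^ (S p) - b ^ (S p) <= INR (S p) * (b + 1) ^ p.
Proof.
  intros Hb. induction p as [|p IH].
  - simpl. lra.
  - assert (E : (b + 1) ^ (S (S p)) - b ^ (S (S p)) = (b + 1) * ((b + 1) ^ (S p) - b ^ (S p)) + b ^ (S p))
      by (simpl; ring).
    rewrite E. rewrite (S_INR (S p)).
    assert (H1 : b ^ (S p) <= (b + 1) ^ (S p)) by (apply pow_incr; lra).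
    assert (H2 : 0 <= b ^ p) by (apply pow_le; lra).
    assert (H3 : (b+1) * (b+1)^p = (b+1)^(S p)) by (simpl; ring).
    assert (H4 : b * b^p = b^(S p)) by (simpl; ring).
    pose proof (pos_INR (S p)).
    destruct IH as [IH1 IH2]. split.
    + assert (b * (INR (S p) * b ^ p) <= (b + 1) * ((b + 1) ^ (S p) - b ^ (S p))).
      { apply Rmult_le_compat; try lra. apply Rmult_le_pos; lra. }
      rewrite <- H4. nra.
    + assert ((b + 1) * ((b + 1) ^ (S p) - b ^ (S p)) <= (b + 1) * (INR (S p) * (b + 1) ^ p)).
      { apply Rmult_le_compat_l; lra. }
      rewrite <- H3 in *. nra.
Qed.

Lemma T_rec p t : 0 < t ->
  INR (S p) * exp (- t) * Tt p t <= (1 - exp (- t)) * Tt (S p) t <= INR (S p) * Tt p t.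
Proof.
  intros Ht. rewrite !Tt_q. set (q := exp (- t)).
  assert (Hq0 : 0 < q) by apply exp_pos.
  assert (Hq1 : q < 1) by (unfold q; rewrite <- exp_0; apply exp_increasing; lra).
  set (b := fun n => J n ^ (S p) * q ^ (S n)).
  set (c := fun n => J n ^ p * q ^ (S n)).
  assert (Eb : ex_series b).
  { eapply ex_series_ext; [|apply (Tt_ex (S p) t Ht)]. intros n. unfold b, q. rewrite exp_J. auto. }
  assert (Ec : ex_series c).
  { eapply ex_series_ext; [|apply (Tt_ex p t Ht)]. intros n. unfold c, q. rewrite exp_J. auto. }
  fold b c.
  assert (EbS : ex_series (fun k => b (S k))) by (apply (proj1 (ex_series_incr_1 (V:=R_NormedModule) b)); auto).
  assert (EcS : ex_series (fun k => c (S k))) by (apply (proj1 (ex_series_incr_1 (V:=R_NormedModule) c)); auto).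
  assert (Eqb : ex_series (fun k => q * b k)) by (apply (ex_series_scal_l (V := R_NormedModule)); auto).
  set (d := fun k => (J (S k) ^ (S p) - J k ^ (S p)) * q ^ (S (S k))).
  assert (Ed : ex_series d).
  { eapply ex_series_ext; [|apply (ex_series_minus (V := R_NormedModule) _ _ EbS Eqb)].
    intros k. unfold d, b. simpl. unfold minus, plus, opp; simpl. unfold Rminus. ring_simplify. ring. }
  assert (E1 : (1 - q) * Series b = b 0%nat + Series d).
  { rewrite Rmult_minus_distr_r, Rmult_1_l, <- Series_scal_l.
    rewrite (Series_incr_1 b) at 1 by auto.
    replace (b 0%nat + Series (fun k => b (S k)) - Series (fun k => q * b k)) with
      (b 0%nat + (Series (fun k => b (S k)) - Series (fun k => q * b k))) by ring.
    f_equal. rewrite <- Series_minus by auto. apply Series_ext. intros k. unfold d, b. simpl. ring. }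
  assert (Eb0 : b 0%nat = q) by (unfold b, J; simpl; rewrite pow1; ring).
  assert (Ec0 : c 0%nat = q) by (unfold c, J; simpl; rewrite pow1; ring).
  assert (Hdk : forall k, INR (S p) * J k ^ p * q ^ (S (S k)) <= d k <= INR (S p) * J (S k) ^ p * q ^ (S (S k))).
  { intros k. unfold d. rewrite J_S. pose proof (pow_diff p (J k) (Rlt_le _ _ (J_pos k))).
    assert (0 <= q ^ (S (S k))) by (apply pow_le; lra). nra. }
  assert (HJp : forall k, 0 <= J k ^ p) by (intros; apply pow_le, Rlt_le, J_pos).
  assert (HqS : forall k, 0 <= q ^ k) by (intros; apply pow_le; lra).
  assert (Hp1 : 1 <= INR (S p)) by (rewrite S_INR; pose proof (pos_INR p); lra).
  rewrite E1. split.
  - rewrite Rmult_assoc, <- Series_scal_l, <- Series_scal_l.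
    apply Rle_trans with (Series d); [|rewrite Eb0; lra].
    apply Series_le; auto. intros k. split.
    + unfold c. apply Rmult_le_pos; [lra|]. apply Rmult_le_pos; [lra|]. apply Rmult_le_pos; auto.
    + unfold c. replace (INR (S p) * (q * (J k ^ p * q ^ S k))) with (INR (S p) * J k ^ p * q ^ (S (S k)))
        by (simpl; ring). apply Hdk.
  - rewrite (Series_incr_1 c) by auto. rewrite Ec0, Eb0, Rmult_plus_distr_l, <- Series_scal_l.
    apply Rplus_le_compat; [nra|].
    apply Series_le.
    + intros k. split.
      * pose proof (Hdk k). assert (0 <= INR (S p) * J k ^ p * q ^ (S (S k))) by
          (apply Rmult_le_pos; [apply Rmult_le_pos|]; auto; lra). lra.
      * unfold c. replace (INR (S p) * (J (S k) ^ p * q ^ S (S k))) with (INR (S p) * J (S k) ^ p * q ^ (S (S k)))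
          by ring. apply Hdk.
    + apply (ex_series_scal_l (V := R_NormedModule)); auto.
Qed.

Lemma squeeze {T} {F : (T -> Prop) -> Prop} {FF : Filter F} (f g h : T -> R) (l : R) :
  F (fun x => f x <= g x <= h x) -> filterlim f F (locally l) -> filterlim h F (locally l) ->
  filterlim g F (locally l).
Proof. intros H1 H2 H3. exact (@filterlim_le_le T F FF f g h (Finite l) H1 H2 H3). Qed.

Lemma lim_eq {T} {F : (T -> Prop) -> Prop} (f : T -> R) (a b : R) :
  filterlim f F (locally a) -> a = b -> filterlim f F (locally b).
Proof. intros H ->; auto. Qed.

Lemma at_right_pos : at_right 0 (fun t => 0 < t).
Proof. exists (mkposreal 1 Rlt_0_1). intros y _ Hy. auto. Qed.

Lemma lim_id0 : filterlim (fun t => t) (at_right 0) (locally 0).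
Proof.
  apply (filterlim_filter_le_1 (F := locally 0)).
  - apply filter_le_within.
  - apply filterlim_id.
Qed.

Lemma exp_lim0 : filterlim exp (at_right 0) (locally 1).
Proof.
  apply (filterlim_filter_le_1 (F := locally 0)); [apply filter_le_within|].
  rewrite <- exp_0. apply (@ex_derive_continuous R_AbsRing R_NormedModule).
  auto_derive. auto.
Qed.

Lemma expm_lim0 : filterlim (fun t => exp (- t)) (at_right 0) (locally 1).
Proof.
  apply (squeeze (fun t => 1 + (-1) * t) _ (fun _ => 1)).
  - generalize at_right_pos. apply filter_imp. intros t Ht. split.
    + pose proof (exp_ineq1_le (- t)). lra.
    + rewrite <- exp_0. apply Rlt_le, exp_increasing. lra.
  - apply (lim_eq _ (1 + (-1) * 0)); [|ring].
    apply lim_plus; [apply lim_const|]. apply lim_mult; [apply lim_const|apply lim_id0].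
  - apply lim_const.
Qed.

Definition Af (t : R) := t / (1 - exp (- t)).

Lemma Af_lim : filterlim Af (at_right 0) (locally 1).
Proof.
  apply (squeeze (fun _ => 1) _ exp).
  - generalize at_right_pos. apply filter_imp. intros t Ht.
    assert (Hq : exp (- t) < 1) by (rewrite <- exp_0; apply exp_increasing; lra).
    pose proof (exp_ineq1_le (- t)). pose proof (exp_ineq1_le t).
    assert (He : exp t * exp (- t) = 1) by (rewrite <- exp_plus, Rplus_opp_r; apply exp_0).
    pose proof (exp_pos t). unfold Af. split.
    + apply (Rmult_le_reg_r (1 - exp (- t))); [lra|]. unfold Rdiv.
      rewrite Rmult_assoc, Rinv_l by lra. lra.
    + apply (Rmult_le_reg_r (1 - exp (- t))); [lra|]. unfold Rdiv.
      rewrite Rmult_assoc, Rinv_l by lra. nra.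
  - apply lim_const.
  - apply exp_lim0.
Qed.

Definition fT p t := t ^ (S p) * Tt p t.

Lemma fT_lim p : filterlim (fT p) (at_right 0) (locally (INR (fact p))).
Proof.
  induction p as [|p IH].
  - apply (filterlim_ext_loc (fun t => Af t * exp (- t))).
    + generalize at_right_pos. apply filter_imp. intros t Ht.
      assert (Hq : exp (- t) < 1) by (rewrite <- exp_0; apply exp_increasing; lra).
      pose proof (exp_pos (- t)).
      unfold fT, Af. rewrite Tt_q.
      destruct (geomS_series 1 (exp (- t))) as [_ E]; [lra|].
      rewrite (Series_ext _ (fun n => 1 * exp (- t) ^ S n)) by (intros; simpl; ring).
      rewrite E. simpl. field. lra.
    + apply (lim_eq _ (1 * 1)); [|simpl; ring]. apply lim_mult; [apply Af_lim|apply expm_lim0].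
  - apply (squeeze (fun t => Af t * (INR (S p) * exp (- t) * fT p t)) _ (fun t => Af t * (INR (S p) * fT p t))).
    + generalize at_right_pos. apply filter_imp. intros t Ht.
      assert (Hq : exp (- t) < 1) by (rewrite <- exp_0; apply exp_increasing; lra).
      pose proof (exp_pos (- t)).
      destruct (T_rec p t Ht) as [R1 R2].
      assert (E : fT (S p) t = Af t * (t ^ (S p) * ((1 - exp (- t)) * Tt (S p) t))).
      { unfold fT, Af. simpl. field. lra. }
      assert (HA : 0 <= Af t) by (unfold Af; apply Rlt_le, Rdiv_lt_0_compat; lra).
      assert (Ht' : 0 <= t ^ (S p)) by (apply pow_le; lra).
      rewrite E. unfold fT. split; apply Rmult_le_compat_l; auto; nra.
    + apply (lim_eq _ (1 * (INR (S p) * 1 * INR (fact p)))).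
      * apply lim_mult; [apply Af_lim|]. apply lim_mult; [|apply IH].
        apply lim_mult; [apply lim_const|apply expm_lim0].
      * rewrite fact_simpl, mult_INR. ring.
    + apply (lim_eq _ (1 * (INR (S p) * INR (fact p)))).
      * apply lim_mult; [apply Af_lim|]. apply lim_mult; [apply lim_const|apply IH].
      * rewrite fact_simpl, mult_INR. ring.
Qed.

Lemma tele_sum N : sum_f_R0 (fun k => 2 * (/ J k - / J (S k))) N = 2 * (1 - / J (S N)).
Proof.
  induction N as [|N IH]; simpl.
  - unfold J; simpl. field.
  - rewrite IH. ring.
Qed.

Lemma ex_inv_cube : ex_series (fun k => / J k ^ 3).
Proof.
  assert (Ht : ex_series (fun k => 2 * (/ J k - / J (S k)))).
  { apply (bounded_ex _ 2).
    - intros n. rewrite J_S. pose proof (J_pos n).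
      assert (/ (J n + 1) <= / J n) by (apply Rinv_le_contravar; lra). lra.
    - intros N. rewrite tele_sum. pose proof (J_pos (S N)).
      assert (0 < / J (S N)) by (apply Rinv_0_lt_compat; auto). lra. }
  apply (ex_le_R _ (fun k => 2 * (/ J k - / J (S k)))); [|exact Ht].
  intros k.
  pose proof (J_ge1 k). rewrite J_S.
  set (a := J k) in *.
  rewrite Rabs_pos_eq by (apply Rlt_le, Rinv_0_lt_compat; simpl; nra).
  replace (2 * (/ a - / (a + 1))) with (/ (a * (a + 1) / 2)) by (field; lra).
  apply Rinv_le_contravar.
  - apply Rdiv_lt_0_compat; nra.
  - simpl. nra.
Qed.

Definition cf m j k := J j ^ (S m) * J k ^ m / J k.
Definition term m x j k := cf m j k * exp (x * (J j * J k)).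
Definition D m x := Series (fun j => Series (fun k => term m x j k)).

Lemma cf_pos m j k : 0 < cf m j k.
Proof.
  unfold cf. pose proof (J_pos j); pose proof (J_pos k).
  apply Rdiv_lt_0_compat; auto. apply Rmult_lt_0_compat; apply pow_lt; auto.
Qed.

Lemma term_nonneg m x j k : 0 <= term m x j k.
Proof. unfold term. apply Rmult_le_pos; [apply Rlt_le, cf_pos|apply Rlt_le, exp_pos]. Qed.

Lemma term_mono m x y j k : x <= y -> term m x j k <= term m y j k.
Proof.
  intros H. unfold term. apply Rmult_le_compat_l; [apply Rlt_le, cf_pos|].
  pose proof (J_pos j); pose proof (J_pos k).
  destruct (Req_dec x y) as [->|Hn]; [lra|].
  apply Rlt_le, exp_increasing. apply Rmult_lt_compat_r; [nra|lra].
Qed.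

Lemma kouter m t k : 0 < t ->
  ex_series (fun j => term m (-t) j k) /\
  Series (fun j => term m (-t) j k) = (J k ^ m / J k) * Tt (S m) (t * J k).
Proof.
  intros Ht. pose proof (J_pos k).
  assert (E : forall j, term m (-t) j k = (J k ^ m / J k) * (J j ^ (S m) * exp (- (t * J k) * J j))).
  { intros j. unfold term, cf. replace (- t * (J j * J k)) with (- (t * J k) * J j) by ring. field. lra. }
  split.
  - eapply ex_series_ext. { intros j. symmetry. apply E. }
    apply (ex_series_scal_l (V := R_NormedModule)). apply Tt_ex. nra.
  - rewrite (Series_ext _ _ E). rewrite Series_scal_l. auto.
Qed.

Lemma kouter_bound m t k : 0 < t ->
  (J k ^ m / J k) * Tt (S m) (t * J k) <= INR (fact (S m)) * (2 / t) ^ (S m) * (2 / t) * / J k ^ 3.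
Proof.
  intros Ht. pose proof (J_pos k) as Hk.
  assert (Htk : 0 < t * J k) by nra.
  pose proof (Tt_bound (S m) (t * J k) Htk) as H.
  assert (Hc : 0 <= J k ^ m / J k) by (apply Rlt_le, Rdiv_lt_0_compat; auto; apply pow_lt; auto).
  apply (Rmult_le_compat_l _ _ _ Hc) in H. eapply Rle_trans; [exact H|].
  right. replace (2 / (t * J k)) with ((2 / t) * / J k) by (field; lra).
  rewrite Rpow_mult_distr. rewrite <- Rinv_pow by lra.
  assert (0 < J k ^ m) by (apply pow_lt; auto).
  simpl. field. split; lra.
Qed.

Lemma swap_facts m t : 0 < t ->
  (forall j, ex_series (fun k => term m (-t) j k)) /\
  ex_series (fun j => Series (fun k => term m (-t) j k)) /\
  D m (-t) = Series (fun k => (J k ^ m / J k) * Tt (S m) (t * J k)).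
Proof.
  intros Ht.
  assert (H1 : forall k, ex_series (fun j => term m (-t) j k)) by (intros; apply kouter; auto).
  assert (H2 : ex_series (fun k => Series (fun j => term m (-t) j k))).
  { apply (ex_le_R _ (fun k => INR (fact (S m)) * (2 / t) ^ (S m) * (2 / t) * / J k ^ 3)).
    - intros k. rewrite Rabs_pos_eq.
      + rewrite (proj2 (kouter m t k Ht)). apply kouter_bound; auto.
      + apply series_nonneg; auto. intros; apply term_nonneg.
    - apply (ex_series_scal_l (V := R_NormedModule)). apply ex_inv_cube. }
  destruct (swap_eq (fun j k => term m (-t) j k) (fun j k => term_nonneg _ _ _ _) H1 H2) as [A [B C]].
  split; [auto|split; [auto|]].
  unfold D. rewrite C. apply Series_ext. intros k. apply kouter; auto.
Qed.

Lemma cf_S m j k : cf (S m) j k = cf m j k * (J j * J k).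
Proof. unfold cf. pose proof (J_pos k). simpl. field. lra. Qed.

Lemma term_derive m j k z : is_derive (fun z => term m z j k) z (term (S m) z j k).
Proof.
  unfold term. rewrite cf_S. auto_derive; auto. ring.
Qed.

Lemma ex_row m x j : x < 0 -> ex_series (fun k => term m x j k).
Proof.
  intros Hx. destruct (swap_facts m (- x)) as [A _]; [lra|].
  rewrite Ropp_involutive in A. auto.
Qed.

Lemma ex_col m x : x < 0 -> ex_series (fun j => Series (fun k => term m x j k)).
Proof.
  intros Hx. destruct (swap_facts m (- x)) as [_ [A _]]; [lra|].
  rewrite Ropp_involutive in A. auto.
Qed.

Lemma g_derive m j y : y < 0 ->
  is_derive (fun z => Series (fun k => term m z j k)) y (Series (fun k => term (S m) y j k)).
Proof.
  intros Hy.
  apply (series_derive (fun k z => term m z j k) (fun k z => term (S m) z j k)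
           (fun k => term (S m) (y / 2) j k) y (- y / 2)).
  - lra.
  - intros n z _. apply term_derive.
  - intros n z Hz. rewrite Rabs_pos_eq by apply term_nonneg. apply term_mono.
    apply Rabs_lt_between' in Hz. lra.
  - apply ex_row. lra.
  - intros z Hz. apply ex_row. apply Rabs_lt_between' in Hz. lra.
Qed.

Lemma D_derive m x : x < 0 -> is_derive (D m) x (D (S m) x).
Proof.
  intros Hx. unfold D.
  apply (series_derive (fun j z => Series (fun k => term m z j k)) (fun j z => Series (fun k => term (S m) z j k))
           (fun j => Series (fun k => term (S m) (x / 2) j k)) x (- x / 2)).
  - lra.
  - intros n z Hz. apply Rabs_lt_between' in Hz. apply g_derive. lra.
  - intros n z Hz. apply Rabs_lt_between' in Hz.
    rewrite Rabs_pos_eq by (apply series_nonneg; [intros; apply term_nonneg|apply ex_row; lra]).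
    apply Series_le; [|apply ex_row; lra].
    intros k; split; [apply term_nonneg|apply term_mono; lra].
  - apply ex_col. lra.
  - intros z Hz. apply Rabs_lt_between' in Hz. apply ex_col. lra.
Qed.

Definition Lg z := Series (fun k => z ^ (S k) / J k).

Lemma Lg_derive z0 : -1 < z0 < 1 -> is_derive Lg z0 (/ (1 - z0)).
Proof.
  intros Hz0.
  set (rho := (1 + Rabs z0) / 2).
  assert (Ha : Rabs z0 < 1) by (apply Rabs_def1; lra).
  assert (Hrho : Rabs rho < 1) by (unfold rho; rewrite Rabs_pos_eq; pose proof (Rabs_pos z0); lra).
  assert (Hbd : forall z, Rabs (z - z0) < (1 - Rabs z0) / 2 -> Rabs z <= rho).
  { intros z Hz. pose proof (Rabs_triang_inv z z0). unfold rho. lra. }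
  assert (Hrho0 : 0 <= rho) by (unfold rho; pose proof (Rabs_pos z0); lra).
  assert (Hrho1 : rho < 1) by (unfold rho; lra).
  rewrite <- Series_geom by auto.
  unfold Lg.
  apply (series_derive (fun k z => z ^ (S k) / J k) (fun k z => z ^ k) (fun k => rho ^ k) z0 ((1 - Rabs z0) / 2)).
  - lra.
  - intros n y _. pose proof (J_pos n). auto_derive; auto.
    change (match n with 0%nat => 1 | S _ => INR n + 1 end) with (INR (S n)).
    fold (J n). field. lra.
  - intros n y Hy. rewrite <- RPow_abs. apply pow_incr. split; [apply Rabs_pos|auto].
  - apply ex_series_geom. auto.
  - intros y Hy. apply (ex_le_R _ (fun k => rho ^ k)); [|apply ex_series_geom; auto].
    intros k. pose proof (Hbd y Hy). pose proof (J_ge1 k).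
    unfold Rdiv. rewrite Rabs_mult, <- RPow_abs, Rabs_inv, (Rabs_pos_eq (J k)) by lra.
    assert (Hy1 : Rabs y < 1) by lra.
    assert (Rabs y ^ S k <= Rabs y ^ k).
    { simpl. pose proof (pow_le (Rabs y) k (Rabs_pos y)). pose proof (Rabs_pos y). nra. }
    assert (Rabs y ^ k <= rho ^ k) by (apply pow_incr; split; [apply Rabs_pos|auto]).
    assert (0 < / J k <= 1).
    { split. apply Rinv_0_lt_compat; lra. rewrite <- Rinv_1. apply Rinv_le_contravar; lra. }
    pose proof (pow_le (Rabs y) (S k) (Rabs_pos y)). nra.
Qed.

Lemma log_series z : 0 <= z < 1 -> - ln (1 - z) = Lg z.
Proof.
  intros Hz.
  set (phi := fun z => - ln (1 - z) - Lg z).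
  assert (Hd : forall y, -1 < y < 1 -> is_derive phi y 0).
  { intros y Hy. unfold phi.
    replace 0 with (/ (1 - y) - / (1 - y)) by ring.
    apply (is_derive_minus (fun z => - ln (1 - z)) Lg).
    - auto_derive; [lra|]. field. lra.
    - apply Lg_derive; auto. }
  destruct (MVT_gen phi 0 z (fun _ => 0)) as [c [_ Hc]].
  - intros x Hx. apply Hd. unfold Rmin, Rmax in Hx. destruct (Rle_dec 0 z); lra.
  - intros x Hx. apply continuity_pt_filterlim. apply (@ex_derive_continuous R_AbsRing R_NormedModule).
    exists 0. apply Hd. unfold Rmin, Rmax in Hx. destruct (Rle_dec 0 z); lra.
  - assert (H0 : phi 0 = 0).
    { unfold phi, Lg. rewrite Rminus_0_r, ln_1.
      rewrite (Series_ext _ (fun _ => 0)) by (intros; simpl; unfold Rdiv; ring).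
      rewrite series_zero. ring. }
    rewrite H0 in Hc. unfold phi in Hc. lra.
Qed.

Lemma F_D0 x : x < 0 -> F x = D 0 x.
Proof.
  intros Hx. unfold F, D.
  transitivity (Series (fun n => - (1) * (INR (S n) * ln (1 - exp (x * INR (S n)))))).
  { rewrite Series_scal_l. ring. }
  apply Series_ext. intros j.
  assert (Hz : 0 <= exp (x * J j) < 1).
  { split; [apply Rlt_le, exp_pos|]. rewrite <- exp_0. apply exp_increasing.
    pose proof (J_pos j). nra. }
  fold (J j). 
  replace (- (1) * (J j * ln (1 - exp (x * J j)))) with (J j * - ln (1 - exp (x * J j))) by ring.
  rewrite log_series by auto. unfold Lg. rewrite <- Series_scal_l.
  apply Series_ext. intros k. unfold term, cf.
  rewrite <- exp_J. replace (x * J j * J k) with (x * (J j * J k)) by ring.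
  pose proof (J_pos k). simpl. field. lra.
Qed.

Lemma DnF m x : x < 0 -> Derive_n F m x = D m x.
Proof.
  revert x. induction m as [|m IH]; intros x Hx.
  - simpl. apply F_D0; auto.
  - simpl. rewrite (Derive_ext_loc _ (D m)).
    + apply is_derive_unique. apply D_derive; auto.
    + assert (Hp : 0 < - x) by lra.
      exists (mkposreal _ Hp). intros y Hy. change (Rabs (y - x) < - x) in Hy.
      apply IH. apply Rabs_lt_between' in Hy. lra.
Qed.

Fixpoint G (n : nat) (t : R) : R :=
  match n with
  | O => - exp (- t)
  | S n' => - t ^ (S n') * exp (- t) + INR (S n') * G n' t
  end.

Lemma G_derive n t : is_derive (G n) t (t ^ n * exp (- t)).
Proof.
  induction n as [|n IH]; simpl G.
  - auto_derive; auto. ring.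
  - apply (is_derive_ext (fun t => plus (- t ^ (S n) * exp (- t)) (INR (S n) * G n t))).
    { intros; reflexivity. }
    replace (t ^ S n * exp (- t)) with
      (plus (- (INR (S n) * t ^ n) * exp (- t) + t ^ (S n) * exp (- t)) (INR (S n) * (t ^ n * exp (- t)))).
    2:{ unfold plus; simpl. ring. }
    apply (@is_derive_plus R_AbsRing R_NormedModule).
    + auto_derive; auto. simpl. ring.
    + apply is_derive_scal. auto.
Qed.

Lemma G_0 n : G n 0 = - INR (fact n).
Proof.
  induction n as [|n IH]; simpl G.
  - rewrite Ropp_0, exp_0. simpl. ring.
  - rewrite IH. rewrite fact_simpl, mult_INR. simpl. ring.
Qed.

Lemma G_at0 n : filterlim (G n) (at_right 0) (locally (- INR (fact n))).
Proof.
  rewrite <- G_0.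
  apply (filterlim_filter_le_1 (F := locally 0)); [apply filter_le_within|].
  apply (@ex_derive_continuous R_AbsRing R_NormedModule). exists (0 ^ n * exp (- 0)). apply G_derive.
Qed.

Lemma pow_exp_inf n : filterlim (fun t => t ^ n * exp (- t)) (Rbar_locally p_infty) (locally 0).
Proof.
  apply eps_lim. intros eps Heps.
  set (C := INR (fact (S n))).
  assert (HC : 0 < C) by (apply lt_0_INR, lt_O_fact).
  exists (Rmax 1 (C / eps)). intros t Ht.
  assert (Ht1 : 1 < t) by (eapply Rle_lt_trans; [apply Rmax_l|exact Ht]).
  assert (Ht2 : C / eps < t) by (eapply Rle_lt_trans; [apply Rmax_r|exact Ht]).
  pose proof (pow_le_fact_exp t (S n) ltac:(lra)) as H.
  fold C in H. pose proof (exp_pos t). pose proof (exp_pos (- t)).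
  assert (He : exp t * exp (- t) = 1) by (rewrite <- exp_plus, Rplus_opp_r; apply exp_0).
  assert (Hp : 0 <= t ^ n) by (apply pow_le; lra).
  rewrite Rminus_0_r, Rabs_pos_eq by (apply Rmult_le_pos; lra).
  assert (H2 : t * (t ^ n * exp (- t)) <= C).
  { replace (t * (t ^ n * exp (- t))) with (t ^ (S n) * exp (- t)) by (simpl; ring).
    apply (Rmult_le_compat_r (exp (- t))) in H; [|lra].
    rewrite Rmult_assoc, He in H. lra. }
  apply (Rmult_lt_reg_l t); [lra|].
  apply Rle_lt_trans with C; auto.
  apply (Rmult_lt_compat_r eps) in Ht2; auto.
  unfold Rdiv in Ht2. rewrite Rmult_assoc, Rinv_l, Rmult_1_r in Ht2 by lra. lra.
Qed.

Lemma G_inf n : filterlim (G n) (Rbar_locally p_infty) (locally 0).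
Proof.
  induction n as [|n IH]; simpl G.
  - apply (lim_eq _ (- (1) * 0)); [|ring].
    apply (filterlim_ext (fun t => - (1) * (t ^ 0 * exp (- t)))); [intros; simpl; ring|].
    apply lim_mult; [apply lim_const|apply pow_exp_inf].
  - apply (lim_eq _ (- (1) * 0 + INR (S n) * 0)); [|ring].
    apply (filterlim_ext (fun t => - (1) * (t ^ (S n) * exp (- t)) + INR (S n) * G n t)); [intros; simpl; ring|].
    apply lim_plus; apply lim_mult; try apply lim_const; auto. apply pow_exp_inf.
Qed.

Lemma Gamma_fact m : Gamma (INR m + 2) = INR (fact (S m)).
Proof.
  unfold Gamma. apply is_RInt_gen_unique.
  assert (HD : forall t, Derive (G (S m)) t = t ^ (S m) * exp (- t)) by (intros; apply is_derive_unique, G_derive).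
  apply (is_RInt_gen_ext (Derive (G (S m)))).
  - exists (fun a => 0 < a) (fun b => 0 < b).
    + apply at_right_pos.
    + exists 0. auto.
    + intros a b Ha Hb x Hx. simpl in Hx. rewrite HD.
      replace (INR m + 2 - 1) with (INR (S m)) by (rewrite S_INR; ring).
      rewrite Rpower_pow; auto.
      assert (0 < Rmin a b) by (apply Rmin_glb_lt; auto). lra.
  - replace (INR (fact (S m))) with (0 - - INR (fact (S m))) by ring.
    apply is_RInt_gen_Derive.
    + apply filter_forall. intros ab x _. exists (x ^ (S m) * exp (- x)). apply G_derive.
    + apply filter_forall. intros ab x _.
      apply (continuous_ext (fun t => t ^ (S m) * exp (- t))); [intros; rewrite HD; auto|].
      apply (@ex_derive_continuous R_AbsRing R_NormedModule). auto_derive. auto.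
    + apply G_at0.
    + apply G_inf.
Qed.

Lemma zeta3_pos : 1 <= zeta3.
Proof.
  unfold zeta3. change (1 <= Series (fun n => / J n ^ 3)).
  eapply Rle_trans; [|apply (term_le_series _ 0)].
  - unfold J; simpl. lra.
  - intros n. pose proof (J_pos n). apply Rlt_le, Rinv_0_lt_compat, pow_lt; auto.
  - apply ex_inv_cube.
Qed.

Lemma scale_right c : 0 < c -> filterlim (fun s => s * c) (at_right 0) (at_right 0).
Proof.
  intros Hc P [eps HP]. simpl.
  assert (He : 0 < eps / c) by (apply Rdiv_lt_0_compat; [apply cond_pos|auto]).
  exists (mkposreal _ He). intros y Hy Hy0. apply HP.
  - change (Rabs (y * c - 0) < eps). change (Rabs (y - 0) < eps / c) in Hy.
    rewrite Rminus_0_r in *. rewrite Rabs_mult, (Rabs_pos_eq c) by lra.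
    apply (Rmult_lt_compat_r c) in Hy; auto. unfold Rdiv in Hy.
    rewrite Rmult_assoc, Rinv_l, Rmult_1_r in Hy by lra. auto.
  - nra.
Qed.

Theorem proposition4p3 (m : nat) :
  filterlim
    (fun s : R => Derive_n F m (- s) / (zeta3 * Gamma (INR m + 2) / s ^ (m + 2)))
    (at_right 0) (locally 1).
Proof.
  rewrite Gamma_fact.
  pose proof zeta3_pos as Hz.
  set (Cf := INR (fact (S m))).
  assert (HCf : 0 < Cf) by (apply lt_0_INR, lt_O_fact).
  set (u := fun k s => / J k ^ 3 * fT (S m) (s * J k)).
  apply (filterlim_ext_loc (fun s => Series (fun k => u k s) * / (zeta3 * Cf))).
  - generalize at_right_pos. apply filter_imp. intros s Hs.
    rewrite DnF by lra.
    destruct (swap_facts m s Hs) as [_ [_ E]]. rewrite E.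
    replace (m + 2)%nat with (S (S m)) by lia.
    assert (E2 : Series (fun k => u k s) = s ^ (S (S m)) * Series (fun k => J k ^ m / J k * Tt (S m) (s * J k))).
    { rewrite <- Series_scal_l. apply Series_ext. intros k. unfold u, fT.
      pose proof (J_pos k). rewrite Rpow_mult_distr.
      assert (0 < J k ^ m) by (apply pow_lt; auto). simpl. field. lra. }
    rewrite E2. field. split; [|split]; try lra. apply pow_nonzero. lra.
  - apply (lim_eq _ (Series (fun k => / J k ^ 3 * Cf) * / (zeta3 * Cf))).
    2:{ rewrite Series_scal_r. change (Series (fun n => / J n ^ 3)) with zeta3.
        field. lra. }
    apply lim_mult; [|apply lim_const].
    apply (tannery _ u _ (fun k => / J k ^ 3 * (Cf * 2 ^ (S (S m))))).
    + intros k. apply lim_mult; [apply lim_const|].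
      eapply filterlim_comp; [apply (scale_right (J k) (J_pos k))|apply fT_lim].
    + apply (@ex_series_ext R_AbsRing R_NormedModule (fun k => (Cf * 2 ^ (S (S m))) * / J k ^ 3)); [intros k; change (Cf * 2 ^ S (S m) * / J k ^ 3 = / J k ^ 3 * (Cf * 2 ^ S (S m))); ring|].
      apply (ex_series_scal_l (V := R_NormedModule)). apply ex_inv_cube.
    + generalize at_right_pos. apply filter_imp. intros s Hs k.
      unfold u. pose proof (J_pos k).
      assert (Hsk : 0 < s * J k) by nra.
      assert (Hi : 0 < / J k ^ 3) by (apply Rinv_0_lt_compat, pow_lt; auto).
      assert (Hf : 0 <= fT (S m) (s * J k)) by (unfold fT; apply Rmult_le_pos; [apply pow_le; lra|apply Tt_nonneg; auto]).
      rewrite Rabs_pos_eq by (apply Rmult_le_pos; lra).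
      apply Rmult_le_compat_l; [lra|].
      unfold fT. pose proof (Tt_bound (S m) (s * J k) Hsk) as B.
      apply (Rmult_le_compat_l ((s * J k) ^ S (S m))) in B; [|apply pow_le; lra].
      eapply Rle_trans; [exact B|]. right. fold Cf.
      rewrite !Rpow_mult_distr. unfold Rdiv. rewrite Rpow_mult_distr.
      rewrite <- Rinv_pow by lra. rewrite Rpow_mult_distr.
      assert (0 < s ^ m) by (apply pow_lt; lra). assert (0 < J k ^ m) by (apply pow_lt; lra).
      simpl. field. repeat split; lra.
Qed.
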